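(* Let $(C,\mathfrak p,\mathfrak d)$ be a regular $q$-cycle coalgebra with $\mathfrak p_{11}^1\ne0$. Then $\mathfrak d=\mathfrak p$, $\mathfrak p_{j0}^1=\delta_{j1}$ for all $j$, and $\mathfrak p$ depends only on $\mathfrak p_{1k}^1$, $k=1,\dots,n-1$, via the recursive formulas (all indices in $\{0,\dots,n-1\}$): $$\mathfrak p_{j1}^1\mathfrak p_{11}^1=\mathfrak p_{11}^1\sum_{a=0}^{j-1}\mathfrak p_{1a}^1\mathfrak p_{1,j-a}^1-\sum_{l=2}^{j}l\,\mathfrak p_{j-l+1,1}^1\mathfrak p_{1l}^1\quad\text{for }j>1;$$ $$(i+j-1)\mathfrak p_{11}^1\,\mathfrak p_{ij}^1=\sum_{\substack{a+b=j\\ 1\le h\le i\\ (a,h)\ne(j,1)}}\mathfrak p_{ia}^h\mathfrak p_{1b}^1\mathfrak p_{h1}^1-\sum_{\substack{c+d=1\\ 1\le h\le i\\ 1\le l\le j\\ (h,l)\ne(i,j)}}\mathfrak p_{ic}^h\mathfrak p_{jd}^l\mathfrak p_{hl}^1\quad\text{for }i,j>1;$$ $$\mathfrak p_{jk}^l=\sum_{\substack{j_1+j_2=j\\ k_1+k_2=k\\ j_1+k_1\ge1\\ j_2+k_2\ge l-1}}\mathfrak p_{j_1k_1}^1\mathfrak p_{j_2k_2}^{l-1}\quad\text{for }l>1.$$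
   Context: $K$ is an algebraically closed field of characteristic $0$ and $n\ge2$. $C$ is the coalgebra dual to $K[y]/\langle y^n\rangle$: basis $x_0,\dots,x_{n-1}$, $\Delta(x_i)=\sum_{j+k=i}x_j\otimes x_k$, $\epsilon(x_i)=\delta_{i0}$; $C\otimes C$ has the tensor product coalgebra structure; Sweedler notation $\Delta(b)=b_{(1)}\otimes b_{(2)}$. For linear maps $\mathfrak p,\mathfrak d\colon C\otimes C\to C$ write $a\cdot b=\mathfrak p(a\otimes b)$, $a:b=\mathfrak d(a\otimes b)$, $\mathfrak p(x_i\otimes x_j)=\sum_{k=0}^{n-1}\mathfrak p_{ij}^kx_k$, $\mathfrak d(x_i\otimes x_j)=\sum_{k=0}^{n-1}\mathfrak d_{ij}^kx_k$, with the convention $\mathfrak p_{ij}^k=\mathfrak d_{ij}^k=0$ if $k\ge n$, $i<0$ or $j<0$; sums over $a+b=j$, $c+d=1$ etc. range over nonnegative integers. A triple $(C,\mathfrak p,\mathfrak d)$ with $\mathfrak p,\mathfrak d$ coalgebra morphisms is a regular $q$-magma coalgebra if there are coalgebra morphisms $a\otimes b\mapsto a^b$, $a\otimes b\mapsto a_b$ from $C\otimes C$ to $C$ with $a^{b_{(1)}}\cdot b_{(2)}=(a\cdot b_{(1)})^{b_{(2)}}=\epsilon(b)a$ and $(a:b_{(2)})_{b_{(1)}}=a_{b_{(2)}}:b_{(1)}=\epsilon(b)a$. It is a regular $q$-cycle coalgebra if moreover for all $a,b,c$: (1) $(a\cdot b_{(1)})\cdot(c:b_{(2)})=(a\cdot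 c_{(2)})\cdot(b\cdot c_{(1)})$; (2) $(a\cdot b_{(1)}):(c\cdot b_{(2)})=(a:c_{(2)})\cdot(b:c_{(1)})$; (3) $(a:b_{(1)}):(c:b_{(2)})=(a:c_{(2)}):(b\cdot c_{(1)})$. *)

(* Defs.v *)
From HB Require Import structures.
From mathcomp Require Import all_boot all_order all_algebra.
Set Implicit Arguments. Unset Strict Implicit. Unset Printing Implicit Defensive.
Import GRing.Theory.
Local Open Scope ring_scope.

(* C = dual coalgebra of K[y]/<y^n>, basis x_0..x_{n-1}.
   A linear map f : C (x) C -> C is given by its structure constants
   f i j k = f_{ij}^k, i.e. f(x_i (x) x_j) = sum_k f_{ij}^k x_k. *)
Definition coefs (K : Type) (n : nat) := 'I_n -> 'I_n -> 'I_n -> K.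

(* Extended structure constants on nat indices: 0 when an index is >= n. *)
Definition cf (K : nzRingType) (n : nat) (f : coefs K n) (i j k : nat) : K :=
  match @insub _ (fun m => m < n)%N 'I_n i,
        @insub _ (fun m => m < n)%N 'I_n j,
        @insub _ (fun m => m < n)%N 'I_n k with
  | Some a, Some b, Some c => f a b c
  | _, _, _ => 0
  end.

(* f : C (x) C -> C is a coalgebra morphism (C (x) C with tensor coalgebra
   structure):  Delta o f = (f (x) f) o Delta_{C(x)C}  and  eps o f = eps (x) eps. *)
Definition coalg_mor (K : nzRingType) (n : nat) (f : coefs K n) : Prop :=
  (forall (i j u v : 'I_n),
      cf f i j (u + v) =
      \sum_(i1 < i.+1) \sum_(j1 < j.+1) cf f i1 j1 u * cf f (i - i1) (j - j1) v)
  /\ (forall (i j : 'I_n), cf f i j 0 = ((i == 0%N :> nat) && (j == 0%N :> nat))%:R).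

(* Regular q-magma coalgebra: coalgebra morphisms L (a (x) b |-> a^b) and
   R (a (x) b |-> a_b) with
   a^{b(1)} . b(2) = (a . b(1))^{b(2)} = eps(b) a and
   (a : b(2))_{b(1)} = a_{b(2)} : b(1) = eps(b) a. *)
Definition regular_q_magma (K : nzRingType) (n : nat) (p d : coefs K n) : Prop :=
  coalg_mor p /\ coalg_mor d /\
  exists L R : coefs K n, coalg_mor L /\ coalg_mor R /\
   forall (i j k : 'I_n),
   [/\ \sum_(j1 < j.+1) \sum_(m < n) cf L i j1 m * cf p m (j - j1) k
         = ((j == 0%N :> nat) && (i == k))%:R,
       \sum_(j1 < j.+1) \sum_(m < n) cf p i j1 m * cf L m (j - j1) k
         = ((j == 0%N :> nat) && (i == k))%:R,
       \sum_(j1 < j.+1) \sum_(m < n) cf d i (j - j1) m * cf R m j1 k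
         = ((j == 0%N :> nat) && (i == k))%:R &
       \sum_(j1 < j.+1) \sum_(m < n) cf R i (j - j1) m * cf d m j1 k
         = ((j == 0%N :> nat) && (i == k))%:R].

(* Regular q-cycle coalgebra: additionally identities (1)-(3), evaluated on
   a = x_i, b = x_j, c = x_k and compared at coefficient x_r. *)
Definition regular_q_cycle (K : nzRingType) (n : nat) (p d : coefs K n) : Prop :=
  regular_q_magma p d /\
  forall (i j k r : 'I_n),
  [/\ (* (1) (a.b(1)).(c:b(2)) = (a.c(2)).(b.c(1)) *)
      \sum_(j1 < j.+1) \sum_(m < n) \sum_(m' < n)
         cf p i j1 m * cf d k (j - j1) m' * cf p m m' r
      = \sum_(k1 < k.+1) \sum_(m < n) \sum_(m' < n)
         cf p i (k - k1) m * cf p j k1 m' * cf p m m' r,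
      (* (2) (a.b(1)):(c.b(2)) = (a:c(2)).(b:c(1)) *)
      \sum_(j1 < j.+1) \sum_(m < n) \sum_(m' < n)
         cf p i j1 m * cf p k (j - j1) m' * cf d m m' r
      = \sum_(k1 < k.+1) \sum_(m < n) \sum_(m' < n)
         cf d i (k - k1) m * cf d j k1 m' * cf p m m' r &
      (* (3) (a:b(1)):(c:b(2)) = (a:c(2)):(b.c(1)) *)
      \sum_(j1 < j.+1) \sum_(m < n) \sum_(m' < n)
         cf d i j1 m * cf d k (j - j1) m' * cf d m m' r
      = \sum_(k1 < k.+1) \sum_(m < n) \sum_(m' < n)
         cf d i (k - k1) m * cf p j k1 m' * cf d m m' r].

(* Main.v *)
Require Import Defs.
From HB Require Import structures.
From mathcomp Require Import all_boot all_order all_algebra.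
From mathcomp Require Import zify ring.
From Stdlib Require Import FunctionalExtensionality.
Import GRing.Theory.
Local Open Scope ring_scope.

Section Gen.
Variable K : fieldType.
Variable n : nat.
Hypothesis Hn : (1 < n)%N.
Implicit Types f g : coefs K n.

Lemma cf_out f i j k : (n <= i)%N || (n <= j)%N || (n <= k)%N -> cf f i j k = 0.
Proof.
move=> H; rewrite /cf.
case: insubP => [a Ha _|_]; last by [].
case: insubP => [b Hb _|_]; last by [].
case: insubP => [c Hc _|_]; last by [].
exfalso; move: H; rewrite (leqNgt n i) (leqNgt n j) (leqNgt n k) Ha Hb Hc; done.
Qed.

Lemma cf_ord f (i j k : 'I_n) : cf f i j k = f i j k.
Proof. by rewrite /cf !valK. Qed.

Lemma sum0 (m N : nat) (F : nat -> K) :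
  (forall i, (m <= i < N)%N -> F i = 0) -> \sum_(m <= i < N) F i = 0.
Proof. by move=> H; rewrite big_nat_cond big1 // => i /andP[Hi _]; apply: H. Qed.

Lemma sum1 (m a N : nat) (F : nat -> K) : (m <= a < N)%N ->
  (forall i, (m <= i < N)%N -> i != a -> F i = 0) -> \sum_(m <= i < N) F i = F a.
Proof.
move=> /andP[H1 H2] H.
rewrite (big_cat_nat H1 (ltnW H2)) /= (big_ltn H2).
have -> : \sum_(m <= i < a) F i = 0.
  apply: sum0 => i /andP[Hi1 Hi2]; apply: H; first by lia.
  by rewrite neq_ltn Hi2.
have -> : \sum_(a.+1 <= i < N) F i = 0.
  apply: sum0 => i /andP[Hi1 Hi2]; apply: H; first by lia.
  by rewrite neq_ltn Hi1 orbT.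
by rewrite add0r addr0.
Qed.

Lemma CM {f} : coalg_mor f -> forall i j u v, (i < n)%N -> (j < n)%N -> (u < n)%N -> (v < n)%N ->
  cf f i j (u + v) = \sum_(0 <= i1 < i.+1) \sum_(0 <= j1 < j.+1)
       cf f i1 j1 u * cf f (i - i1) (j - j1) v.
Proof.
move=> [H _] i j u v Hi Hj Hu Hv.
rewrite (H (Ordinal Hi) (Ordinal Hj) (Ordinal Hu) (Ordinal Hv)) /= big_mkord.
by apply: eq_bigr => i1 _; rewrite big_mkord.
Qed.

Lemma CE {f} : coalg_mor f -> forall i j, cf f i j 0 = ((i == 0%N) && (j == 0%N))%:R.
Proof.
move=> [_ H] i j.
case: (ltnP i n) => Hi; last first.
  have Hi0 : (i != 0%N) by lia.
  by rewrite (negPf Hi0) cf_out ?Hi.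
case: (ltnP j n) => Hj; last first.
  have Hj0 : (j != 0%N) by lia.
  by rewrite (negPf Hj0) andbF cf_out ?Hj ?orbT.
exact: (H (Ordinal Hi) (Ordinal Hj)).
Qed.

Lemma f00 {f} : coalg_mor f -> cf f 0 0 1 = 0.
Proof.
move=> Hf.
have E : forall l, (0 < l < n)%N -> cf f 0 0 l = (cf f 0 0 1) ^+ l.
  elim=> [//|l IH] /andP[_ Hl].
  case: l IH Hl => [|l] IH Hl; first by rewrite expr1.
  rewrite -add1n (CM Hf); try lia.
  by rewrite !big_nat1 IH ?exprS //; lia.
have : cf f 0 0 (1 + n.-1) = 0 by rewrite cf_out //; apply/orP; right; lia.
rewrite (CM Hf); try lia.
rewrite !big_nat1 subnn (E n.-1); last by lia.
rewrite -exprS prednK; last by lia.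
by move/eqP; rewrite expf_eq0 => /andP[_ /eqP].
Qed.

Lemma deg {f} : coalg_mor f -> forall l i j, (i + j < l)%N -> cf f i j l = 0.
Proof.
move=> Hf; elim=> [//|l IH] i j H.
case: (ltnP l.+1 n) => Hl; last by rewrite cf_out // Hl !orbT.
case: (ltnP i n) => Hi; last by rewrite cf_out // Hi.
case: (ltnP j n) => Hj; last by rewrite cf_out // Hj orbT.
rewrite -add1n (CM Hf); try lia.
apply: sum0 => i1 /andP[_ Hi1]; apply: sum0 => j1 /andP[_ Hj1].
case: (boolP ((i1 == 0%N) && (j1 == 0%N))) => [/andP[/eqP-> /eqP->]|Hne].
  by rewrite f00 // mul0r.
by rewrite IH ?mulr0 //; lia.
Qed.


Lemma sum_ord_nat (F : nat -> K) : \sum_(m < n) F m = \sum_(0 <= m < n) F m.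
Proof. by rewrite big_mkord. Qed.

Lemma sum1o N (F : 'I_N -> K) (i0 : 'I_N) :
  (forall i : 'I_N, (i : nat) != i0 -> F i = 0) -> \sum_(i < N) F i = F i0.
Proof. by move=> H; rewrite (bigD1 i0) //= big1 ?addr0 // => i Hi; apply: H. Qed.

Lemma reg10 (p d : coefs K n) : regular_q_magma p d -> cf p 1 0 1 != 0 /\ cf d 1 0 1 != 0.
Proof.
case=> Hp [Hd [L [R [HL [HR H]]]]].
have H0 : (0 < n)%N by lia.
case: (H (Ordinal Hn) (Ordinal H0) (Ordinal Hn)) => /= E1 _ E3 _.
move: E1 E3; rewrite !big_ord1 /= !(@sum1o _ _ (Ordinal Hn)) /=.
- move=> E1 E3; split; apply/negP=> /eqP H1.
  + by move: E1; rewrite H1 mulr0 => /eqP; rewrite eq_sym oner_eq0.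
  + by move: E3; rewrite H1 mul0r => /eqP; rewrite eq_sym oner_eq0.
- move=> i /= Hi; case: (i =P 0%N :> nat) => [->|Hi0]; first by rewrite (CE Hd) mul0r.
  by rewrite (deg Hd) ?mul0r //; lia.
- move=> i /= Hi; case: (i =P 0%N :> nat) => [->|Hi0]; first by rewrite (CE HL) mul0r.
  by rewrite (deg HL) ?mul0r //; lia.
Qed.


Lemma f0j {f} (Hf : coalg_mor f) (H10 : cf f 1 0 1 != 0)
  (Hc : forall k, (k%:R == 0 :> K) = (k == 0%N)) : forall j, cf f 0 j 1 = 0.
Proof.
move=> j0.
case: (boolP ((j0 < n)%N && (cf f 0 j0 1 != 0))) => [Hex|]; last first.
  case/nandP => [Hj|/negPn/eqP //].
  by rewrite cf_out //; rewrite -leqNgt in Hj; rewrite Hj orbT.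
exfalso.
have Hex' : exists j, (j < n)%N && (cf f 0 j 1 != 0) by exists j0.
case: (ex_minnP Hex') => m /andP[Hmn Hr] Hmin.
have Hlt : forall j, (j < m)%N -> cf f 0 j 1 = 0.
  move=> j Hj; apply/eqP; apply/negPn/negP => Hne.
  case: (ltnP j n) => Hjn; last by move: Hne; rewrite cf_out ?eqxx // Hjn orbT.
  have := Hmin j; rewrite Hjn Hne => /(_ isT); lia.
have Hm1 : (0 < m)%N.
  rewrite lt0n; apply/negP => /eqP Hm0; move: Hr; rewrite Hm0 (f00 Hf) eqxx //.
set c := cf f 1 0 1.
set r := cf f 0 m 1.
have A : forall l, (l < n)%N -> forall i j, (i < l)%N -> (j < m * (l - i))%N -> cf f i j l = 0.
  elim=> [//|l IH] Hl i j Hi Hj.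
  case: (ltnP j n) => Hjn; last by rewrite cf_out // Hjn orbT.
  rewrite -add1n (CM Hf); try lia.
  apply: sum0 => i1 /andP[_ Hi1]; apply: sum0 => j1 /andP[_ Hj1].
  case: (i1 =P 0%N) => [Ei1|Ni1].
  - subst i1. case: (ltnP j1 m) => Hj1m; first by rewrite Hlt // mul0r.
    rewrite subn0. case: (ltnP i l) => Hil.
    + have E : (m * (l.+1 - i) = m + m * (l - i))%N by rewrite subSn ?mulnS //; lia.
      rewrite E in Hj.
      rewrite IH ?mulr0 //; lia.
    + have E : (l.+1 - i = 1)%N by lia.
      rewrite E muln1 in Hj. lia.
  - have Hle : (m * (l.+1 - i) <= m * (l - (i - i1)))%N.
      by rewrite leq_mul2l; apply/orP; right; lia.
    rewrite IH ?mulr0 //; lia.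
have P0 : forall l, (l < n)%N -> cf f l 0 l = c ^+ l.
  elim=> [_|l IH Hl]; first by rewrite (CE Hf) expr0.
  rewrite -add1n (CM Hf); try lia.
  rewrite (@sum1 0 1 l.+2) /=; [ | lia | ].
  + by rewrite big_nat1 subn1 /= IH ?exprS //; lia.
  + move=> i1 Hi1 Hne; rewrite big_nat1.
    case: (i1 =P 0%N) => [->|Hi0]; first by rewrite (f00 Hf) mul0r.
    rewrite (deg Hf l) ?mulr0 //; lia.
have S : forall k, (k < n)%N -> \sum_(0 <= i1 < k.+1) \sum_(0 <= j1 < m.+1)
     cf f i1 j1 1 * cf f (k - i1) (m - j1) k = (k.+1)%:R * c ^+ k * r.
  elim=> [_|k IH Hk].
  + rewrite big_nat1 (@sum1 0 m m.+1); [|lia|].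
    * by rewrite !subnn (CE Hf) /= -/r expr0 !mulr1 !mul1r.
    * by move=> j1 Hj1 Hne; rewrite Hlt ?mul0r //; lia.
  + rewrite big_ltn // big_ltn //.
    rewrite (@sum1 0 m m.+1); [|lia|]; last first.
      by move=> j1 Hj1 Hne; rewrite Hlt ?mul0r //; lia.
    rewrite subn0 subnn P0 //.
    rewrite (@sum1 0 0 m.+1); [|lia|]; last first.
      move=> j1 Hj1 Hne.
      have E1 : (k.+1 - (k.+1 - 1) = 1)%N by lia.
      have Z : cf f (k.+1 - 1) (m - j1) k.+1 = 0 by apply: A; rewrite ?E1 ?muln1; lia.
      by rewrite Z mulr0.
    rewrite sum0 ?addr0; last first.
      move=> i1 /andP[Hi1 Hi1']; apply: sum0 => j1 /andP[_ Hj1].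
      have E1 : (k.+1 - (k.+1 - i1) = i1)%N by lia.
      have : (m * 2 <= m * i1)%N by rewrite leq_mul2l; apply/orP; right; lia.
      move=> Hm2.
      have Z : cf f (k.+1 - i1) (m - j1) k.+1 = 0 by apply: A; rewrite ?E1; lia.
      by rewrite Z mulr0.
    rewrite !subn0 subn1 /=.
    have -> : cf f k m k.+1 = (k.+1)%:R * c ^+ k * r.
      by rewrite -add1n (CM Hf) ?IH //; lia.
    rewrite -/c !exprS. 
    rewrite -[(k.+2)%:R]natr1 -[(k.+1)%:R]natr1.
    rewrite -/r; ring.
have Z : cf f n.-1 m (1 + n.-1) = 0 by rewrite add1n prednK ?cf_out ?leqnn ?orbT //; lia.
move: Z; rewrite (CM Hf); try lia.
rewrite S; last by lia.
rewrite prednK; last by lia.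
move/eqP; rewrite !mulf_eq0 Hc expf_eq0 (negPf H10) (negPf Hr) andbF /=.
lia.
Qed.


Lemma XD {f} (Hf : coalg_mor f) (H0 : forall j, cf f 0 j 1 = 0) :
  forall l i j, (i < l)%N -> cf f i j l = 0.
Proof.
elim=> [//|l IH] i j Hi.
case: (ltnP l.+1 n) => Hl; last by rewrite cf_out // Hl !orbT.
case: (ltnP i n) => Hin; last by rewrite cf_out // Hin.
case: (ltnP j n) => Hjn; last by rewrite cf_out // Hjn orbT.
rewrite -add1n (CM Hf); try lia.
apply: sum0 => i1 /andP[_ Hi1]; apply: sum0 => j1 /andP[_ Hj1].
case: (i1 =P 0%N) => [->|Hi0]; first by rewrite H0 mul0r.
by rewrite IH ?mulr0 //; lia.
Qed.

Lemma X0 {f} (Hf : coalg_mor f) (Hx : forall t, (t < n)%N -> cf f t 0 1 = (t == 1%N)%:R) :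
  forall b t, (t < n)%N -> cf f t 0 b = (b == t)%:R.
Proof.
elim=> [|b IH] t Ht; first by rewrite (CE Hf) andbT eq_sym.
case: (ltnP b.+1 n) => Hb; last first.
  have Hne : (b.+1 != t) by lia.
  by rewrite cf_out ?Hb ?orbT // (negPf Hne).
rewrite -add1n (CM Hf); try lia.
under eq_bigr => i1 _ do rewrite big_nat1.
case: t Ht => [|t] Ht.
  by rewrite big_nat1 (f00 Hf) mul0r.
rewrite (@sum1 0 1 t.+2); [|lia|].
  by rewrite Hx // IH //; [rewrite mul1r; congr (_%:R); lia | lia].
move=> i1 Hi1 Hne; rewrite Hx; last by lia.
by rewrite (negPf Hne) mul0r.
Qed.

Lemma X1 {f} (Hf : coalg_mor f) (H0 : forall j, cf f 0 j 1 = 0)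
  (Hx : forall t, (t < n)%N -> cf f t 0 1 = (t == 1%N)%:R) :
  forall b m, (m < n)%N -> (b <= m)%N -> cf f m 1 b = b%:R * cf f (m - b + 1) 1 1.
Proof.
elim=> [|b IH] m Hm Hb; first by rewrite (CE Hf) andbF mul0r.
rewrite -[b.+1]add1n (CM Hf); try lia.
under eq_bigr => i1 _ do rewrite big_ltn // big_nat1 !subn0 subnn.
rewrite big_split /=.
rewrite (@sum1 0 1 m.+1); [|lia|]; last first.
  move=> i1 Hi1 Hne; rewrite Hx; last by lia.
  by rewrite (negPf Hne) mul0r.
rewrite (@sum1 0 (m - b) m.+1); [|lia|]; last first.
  move=> i1 Hi1 Hne; rewrite (X0 Hf Hx); last by lia.
  have -> : (b == (m - i1)%N) = false by apply/negP => /eqP E; move/negP: Hne; apply; lia.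
  by rewrite mulr0.
rewrite Hx // mul1r IH; try lia.
rewrite (X0 Hf Hx); last by lia.
have -> : (b == (m - (m - b))%N) = true by apply/eqP; lia.
have -> : (m - 1 - b + 1 = m - b)%N by lia.
have -> : (m - b.+1 + 1 = m - b)%N by lia.
rewrite mulr1 -natr1; ring.
Qed.


Lemma fix10 {f} (Hf : coalg_mor f) (c : nat -> K) (c1 : c 1%N != 0)
  (Hrel : forall k, (k < n)%N -> \sum_(0 <= m < n) cf f k 0 m * c m = c k) :
  forall t, (t < n)%N -> cf f t 0 1 = (t == 1%N)%:R.
Proof.
have T : forall t, (t < n)%N -> forall m, (0 < m)%N -> cf f t 0 m = (m == t)%:R.
  elim/ltn_ind => t IHt Htn.
  have Hge2 : forall m, (1 < m)%N -> cf f t 0 m = (m == t)%:R.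
    move=> m Hm.
    case: (ltnP m n) => Hmn; last first.
      have Hne : (m != t) by lia.
      by rewrite cf_out ?Hmn ?orbT // (negPf Hne).
    have Em : m = (1 + m.-1)%N by lia.
    rewrite [in LHS]Em (CM Hf); try lia.
    under eq_bigr => i1 _ do rewrite big_nat1.
    case: (ltnP t 2) => Ht2.
      apply: (@trans_equal _ _ 0).
        apply: sum0 => i1 /andP[_ Hi1].
        case: (i1 =P 0%N) => [->|Hi0]; first by rewrite (f00 Hf) mul0r.
        have -> : (t - i1 = 0)%N by lia.
        by rewrite (deg Hf m.-1) ?mulr0 //; lia.
      have Hne : (m != t) by lia.
      by rewrite (negPf Hne).
    rewrite (@sum1 0 1 t.+1); [|lia|]; last first.
      move=> i1 Hi1 Hne.
      case: (i1 =P 0%N) => [->|Hi0]; first by rewrite (f00 Hf) mul0r.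
      case: (i1 =P t) => [->|Hit].
        by rewrite subnn (deg Hf m.-1) ?mulr0 //; lia.
      have Z : cf f i1 0 1 = 0.
        rewrite IHt; try lia.
        by rewrite eq_sym (negPf Hne).
      by rewrite Z mul0r.
    rewrite IHt ?eqxx ?mul1r //; try lia.
    rewrite IHt; try lia.
    have -> : (m.-1 == (t - 1)%N) = (m == t) by apply/idP/idP => /eqP H; apply/eqP; lia.
    by [].
  move=> m Hm; case: (ltnP 1 m) => Hm1; first exact: Hge2.
  have -> : m = 1%N by lia.
  case: (t =P 0%N) => [->|Ht0]; first by rewrite (f00 Hf).
  have H := Hrel t Htn.
  rewrite big_mkord in H.
  rewrite (bigD1 (Ordinal Hn)) //= in H.
  have R : \sum_(i < n | i != Ordinal Hn) cf f t 0 i * c i =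
           \sum_(i < n | i != Ordinal Hn) (i == t :> nat)%:R * c i.
    apply: eq_bigr => i Hi.
    have Hi' : (i : nat) != 1%N := Hi.
    case: (i =P 0%N :> nat) => [E|E].
      rewrite E (CE Hf) /=.
      have -> : (t == 0%N) = false by apply/negP => /eqP.
      by have -> : (0%N == t) = false by apply/negP => /eqP E'; apply: Ht0.
    by rewrite Hge2 //; lia.
  rewrite R in H.
  case: (t =P 1%N) => [Et|Nt].
    subst t. rewrite big1 ?addr0 in H; last first.
      by move=> i Hi; have Hi' : (i : nat) != 1%N := Hi; rewrite (negPf Hi') mul0r.
    have : (cf f 1 0 1 - 1) * c 1%N = 0 by rewrite mulrBl mul1r H subrr.
    move/eqP; rewrite mulf_eq0 (negPf c1) orbF subr_eq0 => /eqP ->.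
    by [].
  have Htn' : (Ordinal Htn != Ordinal Hn) by apply/negP => /eqP [] E; apply: Nt.
  rewrite (bigD1 (Ordinal Htn)) //= eqxx mul1r big1 ?addr0 in H; last first.
    move=> i /andP[Hi1 Hi2].
    have Hi' : (i : nat) != t := Hi2.
    by rewrite (negPf Hi') mul0r.
  have : cf f t 0 1 * c 1%N = 0 by apply: (@addIr _ (c t)); rewrite /= add0r.
  move/eqP; rewrite mulf_eq0 (negPf c1) orbF => /eqP ->.
  by have -> : (1%N == t) = false by apply/negP => /eqP E; apply: Nt.
move=> t Ht; rewrite T //.
by rewrite eq_sym.
Qed.


Lemma cycI (p d : coefs K n) (H : regular_q_cycle p d) i j k :
  (i < n)%N -> (j < n)%N -> (k < n)%N ->
  [/\ \sum_(0 <= j1 < j.+1) \sum_(0 <= m < n) \sum_(0 <= m' < n)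
         cf p i j1 m * cf d k (j - j1) m' * cf p m m' 1
      = \sum_(0 <= k1 < k.+1) \sum_(0 <= m < n) \sum_(0 <= m' < n)
         cf p i (k - k1) m * cf p j k1 m' * cf p m m' 1,
      \sum_(0 <= j1 < j.+1) \sum_(0 <= m < n) \sum_(0 <= m' < n)
         cf p i j1 m * cf p k (j - j1) m' * cf d m m' 1
      = \sum_(0 <= k1 < k.+1) \sum_(0 <= m < n) \sum_(0 <= m' < n)
         cf d i (k - k1) m * cf d j k1 m' * cf p m m' 1 &
      \sum_(0 <= j1 < j.+1) \sum_(0 <= m < n) \sum_(0 <= m' < n)
         cf d i j1 m * cf d k (j - j1) m' * cf d m m' 1
      = \sum_(0 <= k1 < k.+1) \sum_(0 <= m < n) \sum_(0 <= m' < n)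
         cf d i (k - k1) m * cf p j k1 m' * cf d m m' 1].
Proof.
move=> Hi Hj Hk.
case: H => _ H.
case: (H (Ordinal Hi) (Ordinal Hj) (Ordinal Hk) (Ordinal Hn)) => /= E1 E2 E3.
split.
- rewrite !big_mkord.
  under eq_bigr => j1 _ do under eq_bigr => m _ do rewrite big_mkord.
  under [RHS]eq_bigr => j1 _ do under eq_bigr => m _ do rewrite big_mkord.
  under eq_bigr => j1 _ do rewrite big_mkord.
  under [RHS]eq_bigr => j1 _ do rewrite big_mkord.
  exact: E1.
- rewrite !big_mkord.
  under eq_bigr => j1 _ do under eq_bigr => m _ do rewrite big_mkord.
  under [RHS]eq_bigr => j1 _ do under eq_bigr => m _ do rewrite big_mkord.
  under eq_bigr => j1 _ do rewrite big_mkord.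
  under [RHS]eq_bigr => j1 _ do rewrite big_mkord.
  exact: E2.
- rewrite !big_mkord.
  under eq_bigr => j1 _ do under eq_bigr => m _ do rewrite big_mkord.
  under [RHS]eq_bigr => j1 _ do under eq_bigr => m _ do rewrite big_mkord.
  under eq_bigr => j1 _ do rewrite big_mkord.
  under [RHS]eq_bigr => j1 _ do rewrite big_mkord.
  exact: E3.
Qed.


Lemma sum2B (F G : nat -> nat -> K) N M :
  \sum_(0 <= i < N) \sum_(0 <= j < M) F i j - \sum_(0 <= i < N) \sum_(0 <= j < M) G i j
  = \sum_(0 <= i < N) \sum_(0 <= j < M) (F i j - G i j).
Proof. by rewrite -sumrB; apply: eq_bigr => i _; rewrite -sumrB. Qed.

Lemma eqA {f g} (Hf : coalg_mor f) (Hg : coalg_mor g) k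
  (IHk : forall k', (k' < k)%N -> forall j, cf f k' j 1 = cf g k' j 1) :
  forall a k' j, (k' < k)%N -> cf f k' j a = cf g k' j a.
Proof.
elim=> [|a IH] k' j Hk'; first by rewrite (CE Hf) (CE Hg).
case: (ltnP a.+1 n) => Ha; last by rewrite !cf_out // Ha !orbT.
case: (ltnP k' n) => Hkn; last by rewrite !cf_out // Hkn.
case: (ltnP j n) => Hjn; last by rewrite !cf_out // Hjn orbT.
rewrite -[a.+1]add1n (CM Hf) ?(CM Hg); try lia.
apply: eq_big_nat => i1 /andP[_ Hi1]; apply: eq_bigr => j1 _.
rewrite IHk ?IH //; lia.
Qed.

Lemma eqA2 {f g} (Hf : coalg_mor f) (Hg : coalg_mor g)
  (Hf0 : forall j, cf f 0 j 1 = 0) (Hg0 : forall j, cf g 0 j 1 = 0) k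
  (IHk : forall k', (k' < k)%N -> forall j, cf f k' j 1 = cf g k' j 1) :
  forall a j, (1 < a)%N -> cf f k j a = cf g k j a.
Proof.
move=> a j Ha.
case: (ltnP a n) => Han; last by rewrite !cf_out // Han !orbT.
case: (ltnP k n) => Hkn; last by rewrite !cf_out // Hkn.
case: (ltnP j n) => Hjn; last by rewrite !cf_out // Hjn orbT.
have Ea : a = (1 + a.-1)%N by lia.
rewrite Ea (CM Hf) ?(CM Hg); try lia.
apply: eq_big_nat => i1 /andP[_ Hi1]; apply: eq_bigr => j1 _.
case: (i1 =P 0%N) => [->|Hi0]; first by rewrite Hf0 Hg0 !mul0r.
case: (i1 =P k) => [->|Hik].
  by rewrite subnn (XD Hf Hf0 a.-1) ?(XD Hg Hg0 a.-1) ?mulr0 //; lia.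
rewrite IHk; try lia. rewrite (eqA Hf Hg k IHk) //; lia.
Qed.

Lemma eq_all {f g} (Hf : coalg_mor f) (Hg : coalg_mor g)
  (H1 : forall k m, (k < n)%N -> (m < n)%N -> cf f k m 1 = cf g k m 1) :
  forall l i j, cf f i j l = cf g i j l.
Proof.
elim=> [|l IH] i j; first by rewrite (CE Hf) (CE Hg).
case: (ltnP l.+1 n) => Hl; last by rewrite !cf_out // Hl !orbT.
case: (ltnP i n) => Hin; last by rewrite !cf_out // Hin.
case: (ltnP j n) => Hjn; last by rewrite !cf_out // Hjn orbT.
rewrite -[l.+1]add1n (CM Hf) ?(CM Hg); try lia.
apply: eq_big_nat => i1 /andP[_ Hi1]; apply: eq_big_nat => j1 /andP[_ Hj1].
by rewrite H1 ?IH //; lia.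
Qed.

Lemma sum_shrink (F : nat -> K) lo hi N : (lo <= hi <= N)%N ->
  (forall a, (a < N)%N -> ~~ (lo <= a < hi)%N -> F a = 0) ->
  \sum_(0 <= a < N) F a = \sum_(lo <= a < hi) F a.
Proof.
move=> /andP[H1 H2] H.
rewrite (big_cat_nat (leq0n lo) (leq_trans H1 H2)) /= sum0 ?add0r; last first.
  move=> a /andP[_ Ha]; apply: H; first by lia.
  by apply/negP => /andP[]; lia.
rewrite (big_cat_nat H1 H2) /= [X in _ + X]sum0 ?addr0 //.
move=> a /andP[Ha1 Ha2]; apply: H; first by lia.
by apply/negP => /andP[]; lia.
Qed.

Lemma sum2_excl (F : nat -> nat -> K) a0 a1 b0 b1 x y :
  (a0 <= x < a1)%N -> (b0 <= y < b1)%N ->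
  \sum_(a0 <= a < a1) \sum_(b0 <= b < b1 | (a, b) != (x, y)) F a b
  = \sum_(a0 <= a < a1) \sum_(b0 <= b < b1) F a b - F x y.
Proof.
move=> Hx Hy; apply/eqP; rewrite eq_sym subr_eq; apply/eqP.
have E : forall a, \sum_(b0 <= b < b1) F a b =
   \sum_(b0 <= b < b1 | (a, b) != (x, y)) F a b + (if a == x then F x y else 0).
  move=> a; rewrite (bigID (fun b => (a, b) != (x, y))) /=; congr (_ + _).
  rewrite big_mkcond /=.
  case: (a =P x) => [->|Hax].
    rewrite (@sum1 b0 y b1) //; first by rewrite eqxx.
    move=> b _ Hb; have -> : (x, b) != (x, y) by rewrite xpair_eqE eqxx /= Hb.
    by [].
  apply: sum0 => b _.
  have -> : (a, b) != (x, y) by rewrite xpair_eqE; apply/negP => /andP[/eqP ? _].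
  by [].
under eq_bigr => a _ do rewrite E.
rewrite big_split /=; congr (_ + _).
rewrite (@sum1 a0 x a1) ?eqxx //.
by move=> a _ Ha; rewrite (negPf Ha).
Qed.

Section Main.
Variables (p d : coefs K n).
Hypothesis HC : regular_q_cycle p d.
Hypothesis Hc : forall k, (k%:R == 0 :> K) = (k == 0%N).
Hypothesis H11 : cf p 1 1 1 != 0.

Lemma Hp : coalg_mor p. Proof. by case: HC => [[]]. Qed.
Lemma Hd : coalg_mor d. Proof. by case: HC => [[_ []]]. Qed.
Lemma p10nz : cf p 1 0 1 != 0. Proof. by case: (@reg10 p d HC.1). Qed.
Lemma d10nz : cf d 1 0 1 != 0. Proof. by case: (@reg10 p d HC.1). Qed.
Lemma Hp0 : forall j, cf p 0 j 1 = 0. Proof. exact: (f0j Hp p10nz Hc). Qed.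
Lemma Hd0 : forall j, cf d 0 j 1 = 0. Proof. exact: (f0j Hd d10nz Hc). Qed.
Definition XDp := XD Hp Hp0.
Definition XDd := XD Hd Hd0.

Lemma col0 {f} (Hf : coalg_mor f) (H0 : forall j, cf f 0 j 1 = 0) (A : K) (X : nat -> K) c :
  \sum_(0 <= m < n) A * cf f 0 c m * X m = A * (c == 0%N)%:R * X 0%N.
Proof.
rewrite (@sum1 0 0 n); [|lia|]; first by rewrite (CE Hf).
by move=> m Hm Hne; rewrite (XD Hf H0) ?mulr0 ?mul0r //; lia.
Qed.

Lemma col1 {f} (Hf : coalg_mor f) (H0 : forall j, cf f 0 j 1 = 0) (A : K) (X : nat -> K) c :
  \sum_(0 <= m < n) A * cf f 1 c m * X m = A * cf f 1 c 1 * X 1%N.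
Proof.
rewrite (@sum1 0 1 n); [by []|lia|].
move=> m Hm Hne; case: (m =P 0%N) => [->|Hm0]; first by rewrite (CE Hf) mulr0 mul0r.
by rewrite (XD Hf H0) ?mulr0 ?mul0r //; lia.
Qed.

Lemma col1G {f} (Hf : coalg_mor f) (H0 : forall j, cf f 0 j 1 = 0) c (B : nat -> K) :
  (forall m, (m < n)%N -> cf f 1 c m = 0 -> B m = 0) -> \sum_(0 <= m < n) B m = B 1%N.
Proof.
move=> HB; rewrite (@sum1 0 1 n); [by []|lia|].
move=> m Hm Hne; apply: HB; first by lia.
case: (m =P 0%N) => [->|Hm0]; first by rewrite (CE Hf).
by rewrite (XD Hf H0) //; lia.
Qed.

Lemma G1 k : (k < n)%N ->
  cf p 1 k 1 * cf p 1 0 1 = cf p 1 0 1 * \sum_(0 <= m < n) cf p k 0 m * cf p 1 m 1.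
Proof.
move=> Hk.
have [E _ _] := @cycI p d HC 1 k 0 Hn Hk (ltnW Hn).
move: E; rewrite big_nat1.
under eq_bigr => j1 _ do under eq_bigr => m _ do rewrite (col0 Hd Hd0).
rewrite (col1G Hp Hp0 (0 - 0)); last first.
  by move=> m _ Z; apply: sum0 => m' _; rewrite Z !mul0r.
rewrite (@sum1 0 k k.+1); [|lia|]; last first.
  move=> j1 Hj1 Hne; apply: sum0 => m _.
  have -> : (k - j1 == 0)%N = false by apply/negP => /eqP; lia.
  by rewrite mulr0 mul0r.
rewrite (col1G Hp Hp0 k); last by move=> m _ Z; rewrite Z !mul0r.
rewrite subnn eqxx mulr1 => ->.
by rewrite big_distrr /=; apply: eq_bigr => m _; rewrite subn0 mulrA.
Qed.


Lemma p10_1 : cf p 1 0 1 = 1.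
Proof.
have E := G1 1 Hn.
move: E; rewrite (col1G Hp Hp0 0); last by move=> m _ Z; rewrite Z mul0r.
move=> E.
have H1 : cf p 1 0 1 * cf p 1 1 1 * (cf p 1 0 1 - 1) =
   cf p 1 0 1 * (cf p 1 0 1 * cf p 1 1 1) - cf p 1 1 1 * cf p 1 0 1 by ring.
rewrite -E subrr in H1.
move/eqP: H1; rewrite !mulf_eq0 (negPf p10nz) (negPf H11) /= subr_eq0.
by move/eqP.
Qed.

Lemma Hrel_p k : (k < n)%N -> \sum_(0 <= m < n) cf p k 0 m * cf p 1 m 1 = cf p 1 k 1.
Proof. by move=> Hk; have := G1 k Hk; rewrite p10_1 mulr1 mul1r => ->. Qed.

Lemma Hxp t : (t < n)%N -> cf p t 0 1 = (t == 1%N)%:R.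
Proof. exact: (fix10 Hp (fun m => cf p 1 m 1) H11 Hrel_p). Qed.

Lemma Hrel_d k : (k < n)%N -> \sum_(0 <= m < n) cf d k 0 m * cf p 1 m 1 = cf p 1 k 1.
Proof.
move=> Hk.
have [E _ _] := @cycI p d HC 1 0 k Hn (ltnW Hn) Hk.
move: E; rewrite big_nat1.
rewrite (col1G Hp Hp0 (0 - 0)); last first.
  by move=> m _ Z; apply: sum0 => m' _; rewrite Z !mul0r.
under [in RHS]eq_bigr => k1 _ do under eq_bigr => m _ do rewrite (col0 Hp Hp0).
rewrite (@sum1 0 0 k.+1); [|lia|]; last first.
  move=> k1 Hk1 Hne; apply: sum0 => m _.
  by rewrite (negPf Hne) mulr0 mul0r.
rewrite [X in _ = X -> _](col1G Hp Hp0 (k - 0)); last by move=> m _ Z; rewrite Z !mul0r.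
rewrite /= p10_1 !mulr1 !subn0 => <-.
by apply: eq_bigr => m _; rewrite mul1r.
Qed.

Lemma Hxd t : (t < n)%N -> cf d t 0 1 = (t == 1%N)%:R.
Proof. exact: (fix10 Hd (fun m => cf p 1 m 1) H11 Hrel_d). Qed.


Lemma dp1 : forall k m, (k < n)%N -> (m < n)%N -> cf p k m 1 = cf d k m 1.
Proof.
elim/ltn_ind => k IHk; elim/ltn_ind => m IHm Hk Hm.
case: (k =P 0%N) => [->|Hk0]; first by rewrite Hp0 Hd0.
case: (boolP ((k == 1%N) && (m == 0%N))) => [/andP[/eqP-> /eqP->]|Hkm].
  by rewrite Hxp ?Hxd.
have IHk' : forall k', (k' < k)%N -> forall j, cf p k' j 1 = cf d k' j 1.
  move=> k' Hk' j; case: (ltnP j n) => Hj; last by rewrite !cf_out // Hj orbT.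
  apply: IHk => //; lia.
have IHm' : forall j, (j < m)%N -> cf p k j 1 = cf d k j 1.
  by move=> j Hj; apply: IHm => //; lia.
have A := eqA Hp Hd k IHk'.
have A2 := eqA2 Hp Hd Hp0 Hd0 k IHk'.
set s := cf p k m 1 - cf d k m 1.
have [E1 _ _] := @cycI p d HC k m 1 Hk Hm Hn.
have [_ E2 _] := @cycI p d HC k 1 m Hk Hn Hm.
set L1 := \sum_(0 <= j1 < m.+1) _ in E1.
set R1 := \sum_(0 <= k1 < 2) _ in E1.
set L2 := \sum_(0 <= j1 < 2) _ in E2.
set R2 := \sum_(0 <= k1 < m.+1) _ in E2.
have Hlow : forall j1 a, (j1 < m)%N -> cf p k j1 a = cf d k j1 a.
  move=> j1 a Hj1; case: (ltnP 1 a) => Ha; first exact: A2.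
  case: (a =P 0%N) => [->|Ha0]; first by rewrite (CE Hp) (CE Hd).
  have -> : a = 1%N by lia.
  exact: IHm'.
have Hkk : forall a j, (a != 1%N) -> cf p k j a = cf d k j a.
  move=> a j Ha; case: (ltnP 1 a) => Ha'; first exact: A2.
  have -> : a = 0%N by lia.
  by rewrite (CE Hp) (CE Hd).
have X : L1 - R2 = s * cf p 1 1 1.
  have eL1 : L1 = \sum_(0 <= j1 < m.+1) \sum_(0 <= a < n)
                   cf p k j1 a * cf d 1 (m - j1) 1 * cf p a 1 1.
    by apply: eq_bigr => j1 _; apply: eq_bigr => a _; rewrite (col1 Hd Hd0).
  have eR2 : R2 = \sum_(0 <= j1 < m.+1) \sum_(0 <= a < n)
                   cf d k j1 a * cf d 1 (m - j1) 1 * cf p a 1 1.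
    rewrite /R2 big_nat_rev /=; apply: eq_big_nat => i /andP[_ Hi].
    have -> : (0 + m.+1 - i.+1 = m - i)%N by lia.
    have -> : (m - (m - i) = i)%N by lia.
    by apply: eq_bigr => a _; rewrite (col1 Hd Hd0).
  rewrite eL1 eR2 sum2B.
  rewrite (@sum1 0 m m.+1); [|lia|]; last first.
    move=> j1 Hj1 Hne; apply: sum0 => a _.
    by rewrite Hlow ?subrr //; lia.
  rewrite (@sum1 0 1 n); [|lia|]; last first.
    by move=> a _ Hne; rewrite Hkk ?subrr.
  by rewrite subnn Hxd // /= !mulr1 -mulrBl.
have Y : R1 - L2 = (k + m)%:R * cf p 1 1 1 * s.
  have eR1 : R1 = \sum_(0 <= a < n) \sum_(0 <= b < n) cf p k 1 a * cf p m 0 b * cf p a b 1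
                + \sum_(0 <= a < n) \sum_(0 <= b < n) cf p k 0 a * cf p m 1 b * cf p a b 1.
    by rewrite /R1 big_ltn // big_nat1.
  have eL2 : L2 = \sum_(0 <= a < n) \sum_(0 <= b < n) cf p k 1 a * cf p m 0 b * cf d a b 1
                + \sum_(0 <= a < n) \sum_(0 <= b < n) cf p k 0 a * cf p m 1 b * cf d a b 1.
    by rewrite /L2 big_ltn // big_nat1 addrC.
  rewrite eR1 eL2.
  rewrite [X in X = _](_ : _ = (\sum_(0 <= a < n) \sum_(0 <= b < n) cf p k 1 a * cf p m 0 b * cf p a b 1
      - \sum_(0 <= a < n) \sum_(0 <= b < n) cf p k 1 a * cf p m 0 b * cf d a b 1)
      + (\sum_(0 <= a < n) \sum_(0 <= b < n) cf p k 0 a * cf p m 1 b * cf p a b 1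
      - \sum_(0 <= a < n) \sum_(0 <= b < n) cf p k 0 a * cf p m 1 b * cf d a b 1)); last by ring.
  rewrite !sum2B.
  rewrite (@sum1 0 k n); [|lia|]; last first.
    move=> a Ha Hne; apply: sum0 => b _.
    case: (ltnP a k) => Hak; first by rewrite IHk' // subrr.
    by rewrite (XDp a) ?mul0r ?subrr //; lia.
  rewrite (@sum1 0 m n); [|lia|]; last first.
    move=> b Hb Hne; rewrite (X0 Hp Hxp) //.
    by rewrite (negPf Hne) mulr0 !mul0r subrr.
  rewrite [X in _ + X = _](@sum1 0 k n); [|lia|]; last first.
    move=> a Ha Hne; apply: sum0 => b _.
    by rewrite (X0 Hp Hxp) // (negPf Hne) !mul0r subrr.
  rewrite (@sum1 0 m n); [|lia|]; last first.
    move=> b Hb Hne.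
    case: (ltnP b m) => Hbm; first by rewrite IHm' // subrr.
    by rewrite (XDp b) ?mulr0 ?mul0r ?subrr //; lia.
  rewrite (X0 Hp Hxp) // eqxx (X0 Hp Hxp) // eqxx.
  rewrite (X1 Hp Hp0 Hxp k k) // (X1 Hp Hp0 Hxp m m) //.
  rewrite !subnn !add0n /s.
  rewrite natrD /=; ring.
rewrite E1 -E2 Y in X.
have Z : s * (cf p 1 1 1 * ((k + m)%:R - 1)) = (k + m)%:R * cf p 1 1 1 * s - s * cf p 1 1 1 by ring.
rewrite X subrr in Z.
have H1 : (1 <= k + m)%N by lia.
move/eqP: Z; rewrite -(natrB _ H1) !mulf_eq0 (negPf H11) Hc /=.
have -> : (k + m - 1 == 0)%N = false by apply/negP => /eqP; move: Hkm; lia.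
by rewrite orbF /s subr_eq0 => /eqP.
Qed.


Lemma deq : d = p.
Proof.
have H := eq_all Hd Hp (fun k m Hk Hm => esym (dp1 k m Hk Hm)).
apply: functional_extensionality => i; apply: functional_extensionality => j.
apply: functional_extensionality => l.
by rewrite -!cf_ord H.
Qed.


Lemma f4 : forall j k l : nat, (j < n)%N -> (k < n)%N -> (1 < l < n)%N ->
         cf p j k l
         = \sum_(0 <= j1 < j.+1) \sum_(0 <= k1 < k.+1
                | (1 <= j1 + k1)%N && (l.-1 <= (j - j1) + (k - k1))%N)
              cf p j1 k1 1 * cf p (j - j1) (k - k1) l.-1.
Proof.
move=> j k l Hj Hk /andP[Hl1 Hl].
have El : l = (1 + l.-1)%N by lia.
rewrite [in LHS]El (CM Hp); try lia.
apply: eq_bigr => j1 _; rewrite [RHS]big_mkcond /=.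
apply: eq_bigr => k1 _; case: ifP => // /negbT; rewrite negb_and => /orP[H|H].
  have [-> ->] : j1 = 0%N /\ k1 = 0%N by lia.
  by rewrite (f00 Hp) mul0r.
by rewrite (deg Hp l.-1) ?mulr0 //; lia.
Qed.

Lemma f2 : forall j : nat, (1 < j < n)%N ->
         cf p j 1 1 * cf p 1 1 1
         = cf p 1 1 1 * (\sum_(0 <= a < j) cf p 1 a 1 * cf p 1 (j - a) 1)
           - \sum_(2 <= l < j.+1) l%:R * cf p (j - l + 1) 1 1 * cf p 1 l 1.
Proof.
move=> j /andP[Hj1 Hj].
have [E _ _] := @cycI p d HC 1 j 1 Hn Hj Hn.
rewrite deq in E.
set L := \sum_(0 <= j1 < j.+1) _ in E.
set R := \sum_(0 <= k1 < 2) _ in E.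
have eL : L = \sum_(0 <= a < j.+1) cf p 1 a 1 * cf p 1 (j - a) 1 * cf p 1 1 1.
  apply: eq_bigr => a _.
  under eq_bigr => h _ do rewrite (col1 Hp Hp0).
  by rewrite (col1G Hp Hp0 a) //; move=> h _ Z; rewrite Z !mul0r.
have eR : R = cf p 1 1 1 * cf p 1 j 1 +
   \sum_(1 <= l < j.+1) l%:R * cf p (j - l + 1) 1 1 * cf p 1 l 1.
  rewrite /R big_ltn // big_nat1.
  rewrite (col1G Hp Hp0 (1 - 0)); last first.
    by move=> a _ Z; apply: sum0 => b _; rewrite Z !mul0r.
  rewrite [X in _ + X = _](col1G Hp Hp0 (1 - 1)); last first.
    by move=> a _ Z; apply: sum0 => b _; rewrite Z !mul0r.
  congr (_ + _).
    rewrite (@sum1 0 j n); [|lia|]; last first.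
      by move=> b _ Hb; rewrite (X0 Hp Hxp) // (negPf Hb) mulr0 mul0r.
    by rewrite (X0 Hp Hxp) // eqxx mulr1.
  rewrite (@sum_shrink _ 1 j.+1); [|lia|]; last first.
    move=> b Hb Hnb; case: (b =P 0%N) => [->|Hb0].
      by rewrite (CE Hp) andbF mulr0 mul0r.
    by rewrite (XDp b) ?mulr0 ?mul0r //; lia.
  apply: eq_big_nat => b /andP[Hb1 Hb2].
  rewrite (X1 Hp Hp0 Hxp b j); try lia.
  by rewrite subnn Hxp // mul1r.
rewrite eL eR in E.
rewrite big_nat_recr //= subnn Hxp // mulr1 [X in _ = _ + X]big_ltn // in E.
have Ej : (j - 1 + 1 = j)%N by lia.
rewrite Ej mul1r in E.
have eS : \sum_(0 <= a < j) cf p 1 a 1 * cf p 1 (j - a) 1 * cf p 1 1 1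
        = cf p 1 1 1 * \sum_(0 <= a < j) cf p 1 a 1 * cf p 1 (j - a) 1.
  by rewrite big_distrr /=; apply: eq_bigr => a _; rewrite mulrC.
rewrite eS in E.
set S1 := \sum_(0 <= a < j) cf p 1 a 1 * cf p 1 (j - a) 1 in E *.
set S2 := \sum_(2 <= l < j.+1) _ in E *.
rewrite [RHS](_ : _ = (cf p 1 1 1 * S1 + cf p 1 j 1 * cf p 1 1 1) - cf p 1 j 1 * cf p 1 1 1 - S2);
  last by ring.
rewrite E; ring.
lia.
Qed.


Lemma f3 : forall i j : nat, (1 < i < n)%N -> (1 < j < n)%N ->
         (i + j - 1)%:R * cf p 1 1 1 * cf p i j 1
         = \sum_(0 <= a < j.+1) \sum_(1 <= h < i.+1 | (a, h) != (j, 1%N))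
              cf p i a h * cf p 1 (j - a) 1 * cf p h 1 1
           - \sum_(0 <= c < 2) \sum_(1 <= h < i.+1) \sum_(1 <= l < j.+1 | (h, l) != (i, j))
              cf p i c h * cf p j (1 - c) l * cf p h l 1.
Proof.
move=> i j /andP[Hi1 Hi] /andP[Hj1 Hj].
have [E _ _] := @cycI p d HC i j 1 Hi Hj Hn.
have Hi0 : (i == 0%N) = false by apply/negP => /eqP; lia.
have Hj0 : (j == 0%N) = false by apply/negP => /eqP; lia.
rewrite deq in E.
set L := \sum_(0 <= j1 < j.+1) _ in E.
set R := \sum_(0 <= k1 < 2) _ in E.
have eL : L = \sum_(0 <= a < j.+1) \sum_(1 <= h < i.+1) cf p i a h * cf p 1 (j - a) 1 * cf p h 1 1.
  apply: eq_bigr => a _.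
  rewrite (@sum_shrink _ 1 i.+1); [|lia|]; last first.
    move=> h Hh Hnh; apply: sum0 => b _.
    case: (h =P 0%N) => [->|Hh0]; first by rewrite (CE Hp) Hi0 /= !mul0r.
    by rewrite (XDp h) ?mul0r //; lia.
  by apply: eq_big_nat => h _; rewrite (col1 Hp Hp0).
have shr : forall c c', \sum_(0 <= a < n) \sum_(0 <= b < n) cf p i c a * cf p j c' b * cf p a b 1
   = \sum_(1 <= h < i.+1) \sum_(1 <= l < j.+1) cf p i c h * cf p j c' l * cf p h l 1.
  move=> c c'.
  rewrite (@sum_shrink _ 1 i.+1); [|lia|]; last first.
    move=> h Hh Hnh; apply: sum0 => b _.
    case: (h =P 0%N) => [->|Hh0]; first by rewrite (CE Hp) Hi0 /= !mul0r.
    by rewrite (XDp h) ?mul0r //; lia.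
  apply: eq_big_nat => h _.
  rewrite (@sum_shrink _ 1 j.+1); [|lia|]; last first.
    move=> l Hl Hnl.
    case: (l =P 0%N) => [->|Hl0]; first by rewrite (CE Hp) Hj0 /= mulr0 !mul0r.
    by rewrite (XDp l) ?mulr0 ?mul0r //; lia.
  by [].
have eR : R = \sum_(0 <= c < 2) \sum_(1 <= h < i.+1) \sum_(1 <= l < j.+1)
              cf p i c h * cf p j (1 - c) l * cf p h l 1.
  rewrite /R big_ltn // big_nat1 [RHS]big_ltn // big_nat1 !shr addrC.
  by [].
rewrite (sum2_excl (fun a h => cf p i a h * cf p 1 (j - a) 1 * cf p h 1 1)); [|lia|lia].
have eX : forall c, \sum_(1 <= h < i.+1) \sum_(1 <= l < j.+1 | (h, l) != (i, j))
              cf p i c h * cf p j (1 - c) l * cf p h l 1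
   = \sum_(1 <= h < i.+1) \sum_(1 <= l < j.+1) cf p i c h * cf p j (1 - c) l * cf p h l 1
     - cf p i c i * cf p j (1 - c) j * cf p i j 1.
  by move=> c; rewrite (sum2_excl (fun h l => cf p i c h * cf p j (1 - c) l * cf p h l 1)) //; lia.
rewrite (eq_bigr _ (fun c _ => eX c)).
rewrite sumrB -eL -eR E.
rewrite big_ltn // big_nat1 subnn Hxp //.
rewrite (X0 Hp Hxp i i) // (X0 Hp Hxp j j) // !eqxx.
rewrite (X1 Hp Hp0 Hxp i i) // (X1 Hp Hp0 Hxp j j) // !subnn !add0n.
rewrite natrB; last by lia.
rewrite natrD /=; ring.
Qed.

End Main.
End Gen.

Theorem proposition4p5 (K : closedFieldType) (n : nat) (p d : coefs K n) :
  [pchar K] =i pred0 -> (2 <= n)%N ->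
  regular_q_cycle p d ->
  cf p 1 1 1 != 0 ->
  [/\ d = p,
      (forall j : 'I_n, cf p j 0 1 = (j == 1%N :> nat)%:R),
      (forall j : nat, (1 < j < n)%N ->
         cf p j 1 1 * cf p 1 1 1
         = cf p 1 1 1 * (\sum_(0 <= a < j) cf p 1 a 1 * cf p 1 (j - a) 1)
           - \sum_(2 <= l < j.+1) l%:R * cf p (j - l + 1) 1 1 * cf p 1 l 1),
      (forall i j : nat, (1 < i < n)%N -> (1 < j < n)%N ->
         (i + j - 1)%:R * cf p 1 1 1 * cf p i j 1
         = \sum_(0 <= a < j.+1) \sum_(1 <= h < i.+1 | (a, h) != (j, 1%N))
              cf p i a h * cf p 1 (j - a) 1 * cf p h 1 1
           - \sum_(0 <= c < 2) \sum_(1 <= h < i.+1) \sum_(1 <= l < j.+1 | (h, l) != (i, j))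
              cf p i c h * cf p j (1 - c) l * cf p h l 1) &
      (forall j k l : nat, (j < n)%N -> (k < n)%N -> (1 < l < n)%N ->
         cf p j k l
         = \sum_(0 <= j1 < j.+1) \sum_(0 <= k1 < k.+1
                | (1 <= j1 + k1)%N && (l.-1 <= (j - j1) + (k - k1))%N)
              cf p j1 k1 1 * cf p (j - j1) (k - k1) l.-1)].
Proof.
move=> Hch Hn HC H11.
have Hc : forall k, (k%:R == 0 :> K) = (k == 0%N) := (pcharf0P K).1 Hch.
split.
- exact: (@deq K n Hn p d HC Hc H11).
- by move=> j; exact: (@Hxp K n Hn p d HC Hc H11 j (ltn_ord j)).
- exact: (@f2 K n Hn p d HC Hc H11).
- exact: (@f3 K n Hn p d HC Hc H11).
- exact: (@f4 K n Hn p d HC H11).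
Qed.
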